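(* Let $\mathcal{S}$ be an $\mathcal{I}$-weighted boundary stratum with dual graph $\Gamma(\mathcal{S})$, and let $\gamma_1,\gamma_2$ be edge-disjoint loops in $\Gamma(\mathcal{S})$. Then $a=\lambda(\gamma_1)\otimes\lambda(\gamma_2)\in\mathbf{S}_{\mathbb{Q}}(F)$ lies in $N(\mathcal{S})$. Moreover, if $\gamma_1$ and $\gamma_2$ are simple, then the function $\Psi(a)$ on $\mathcal{S}$ is the product of cross-ratios $$\Psi(a)=\prod_{v\in\gamma_1\cap\gamma_2}\,[\gamma_1^{\mathrm{out}}(v),\gamma_1^{\mathrm{in}}(v),\gamma_2^{\mathrm{out}}(v),\gamma_2^{\mathrm{in}}(v)],$$ the product running over the vertices common to $\gamma_1$ and $\gamma_2$.
   Context: $F$ is a totally real number field of degree $g$, with trace pairing $\langle x,y\rangle=\mathrm{Tr}_{F/\mathbb{Q}}(xy)$. A lattice $\mathcal{I}\subset F$ is an additive subgroup of rank $g$; its dual is $\mathcal{I}^\vee=\{x\in F:\langle x,y\rangle\in\mathbb{Z}\ \forall y\in\mathcal{I}\}$. An $\mathcal{I}$-weighted stable curve is a stable curve $X$ of arithmetic genus $g$ and geometric genus $0$, together with an element of $\mathcal{I}$ (its weight) attached to each cusp of $X'=X\setminus\{\text{nodes}\}$ (i.e. to each of the two branches at each node), such that the two cusps at a node have opposite weights, the weights on each component sum to zero, and the weights span $\mathcal{I}$. An $\mathcal{I}$-weighted boundary stratum $\mathcal{S}$ is the moduli space of $\mathcal{I}$-weighted stable curves topologically equivalent (via weight-preserving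 homeomorphisms) to a fixed one. Its dual graph $\Gamma(\mathcal{S})$ has a vertex per component and an edge per node (loops and multiple edges allowed); each edge is oriented and labelled with the weight of the branch at its head (reversing orientation and negating the weight gives the same object). For a loop $\gamma$ in $\Gamma(\mathcal{S})$, $\lambda(\gamma)\in F$ is the unique element with $\langle\lambda(\gamma),r\rangle$ equal, for every edge $e$ of weight $r$, to the number of times $\gamma$ traverses $e$ positively minus the number of times negatively; $\lambda(\gamma)\in\mathcal{I}^\vee$. Two loops are edge-disjoint if they share no edge; a loop is simple if it meets each vertex at most once. For a simple loop $\gamma$ through $v$, $\gamma^{\mathrm{in}}(v)$ (resp. $\gamma^{\mathrm{out}}(v)$) is the marked point on the component of $v$ (a punctured $\mathbb{P}^1$) at which $\gamma$ enters (resp. leaves) that component. $\mathbf{S}_{\mathbb{Q}}(F)$ is the quotient of $F\otimes_{\mathbb{Q}}F$ by the span of $\theta(z)-z$, $\theta(x\otimes y)=y\otimes x$, and $\mathbf{S}_{\mathbb{Z}}(\mathcal{I}^\vee)$ the analogous quotient of $\mathcal{I}^\vee\otimes_{\mathbb{Z}}\mathcal{I}^\vee$; $\mathrm{Sym}_{\mathbb{Q}}(F)$ is the $\theta$-fixed subspace of $F\otimes F$, dual to $\mathbf{S}_{\mathbb{Q}}(F)$ via $\langle a\otimes b,c\otimes d\rangle=\langle a,c\rangle\langle b,d\rangle$. $W(\mathcal{S})\subset\mathrm{Sym}_{\mathbb{Q}}(F)$ is spanned by $r\otimes r$ for $r$ running over the weights of $\mathcal{S}$, and $N(\mathcal{S})\subset\mathbf{S}_{\mathbb{Q}}(F)$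 is its annihilator. For $\alpha\otimes\beta\in N(\mathcal{S})\cap\mathbf{S}_{\mathbb{Z}}(\mathcal{I}^\vee)$ and $X\in\mathcal{S}$: let $\omega_X$ be the unique stable form on $X$ (holomorphic 1-form on $X'$ with at worst simple poles at the cusps) whose residue at a cusp of weight $r$ is $\langle\alpha,r\rangle$, and let $\gamma$ be a path on $X$ whose algebraic intersection number with each node of weight $r$ is $\langle\beta,r\rangle$, avoiding nodes where $\omega_X$ has a pole; then $\Psi(\alpha\otimes\beta)(X)=\exp\left(\int_\gamma\omega_X\right)$, and $\Psi$ extends to a homomorphism from $N(\mathcal{S})\cap\mathbf{S}_{\mathbb{Z}}(\mathcal{I}^\vee)$ to nonvanishing holomorphic functions on $\mathcal{S}$. The cross-ratio is $[a,b,c,d]=\frac{(a-c)(b-d)}{(a-d)(b-c)}$. *)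

(* Defs.v *)
From HB Require Import structures.
From mathcomp Require Import all_boot all_order all_algebra all_field.
From mathcomp Require Import Rstruct.
From Stdlib Require Import Reals.
From Coquelicot Require Import Coquelicot.

Set Implicit Arguments.
Unset Strict Implicit.
Unset Printing Implicit Defensive.

Import GRing.Theory Num.Theory.
Local Open Scope ring_scope.

(* Tr_{F/Q}(x) = trace of the Q-linear map y |-> x*y, computed in the basis  *)
(* vbasis fullv.                                                             *)
Definition trF (F : fieldExtType rat) (x : F) : rat :=
  (\sum_(i < \dim {:F}) coord (vbasis fullv) i (x * (vbasis fullv)`_i)).

Definition tpair (F : fieldExtType rat) (x y : F) : rat := trF (x * y).

Definition totally_real (F : fieldExtType rat) : Prop :=
  forall (f : {rmorphism F -> algC}) (x : F), f x \is Num.real.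

Definition totally_real_field_of_degree (g : nat) (F : fieldExtType rat) : Prop :=
  \dim {:F} = g /\ totally_real F.

(* A lattice I in F (additive subgroup of rank g = [F:Q]) is given by a      *)
(* Z-basis b, which is Q-linearly independent; I = Z b_1 + ... + Z b_g.      *)
Definition lattice_basis (g : nat) (F : fieldExtType rat) (b : 'I_g -> F) : Prop :=
  free [seq b i | i <- enum 'I_g].

Definition in_lattice (g : nat) (F : fieldExtType rat) (b : 'I_g -> F) (x : F) : Prop :=
  exists z : 'I_g -> int, x = (\sum_(i < g) b i *~ z i).

(* V = components (vertices), H = cusps of X' = branches at nodes (half-edges),
   vtx h = component carrying the cusp h, opp h = other branch at the same node.
   An edge (node) is a pair {h, opp h}; choosing h as its head orients it and
   labels it by the weight of h. *)
Record dgraph := DGraph {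
  dV : finType;
  dH : finType;
  vtx : dH -> dV;
  opp : dH -> dH
}.

Definition adjacent (G : dgraph) : rel (dV G) :=
  fun u v => [exists h : dH G, (vtx h == u) && (vtx (opp h) == v)].

(* The combinatorial data of an I-weighted boundary stratum: a stable curve of
   arithmetic genus g whose components are all rational (geometric genus 0),
   with no marked points other than the nodes, weights w : H -> F with
   opposite weights at the two branches of a node, zero sum on each component,
   all in I, and spanning I. *)
Definition weighted_stratum (g : nat) (F : fieldExtType rat) (b : 'I_g -> F)
    (G : dgraph) (w : dH G -> F) : Prop :=
  [/\ (forall h : dH G, opp (opp h) = h /\ opp h <> h),
      (forall u v : dV G, connect (@adjacent G) u v),
      (* stability: each P^1 component carries >= 3 special points *)
      (forall v : dV G, leq 3 #|[set h | vtx h == v]|),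
      (* arithmetic genus g: #nodes - #components + 1 = g *)
      addn #|dH G| 2 = muln 2 (addn g #|dV G|) &
   [/\ (forall h, w (opp h) = - w h),
      (forall v : dV G, \sum_(h | vtx h == v) w h = 0),
      (forall h, in_lattice b (w h)) &
      (forall x, in_lattice b x ->
         exists z : dH G -> int, x = (\sum_h w h *~ z h))]].

(* A loop is a nonempty cyclic sequence of steps [h_1; ...; h_n]; step h means
   traversing the edge {opp h, h} from the component of opp h to the component
   of h (i.e. arriving through the cusp h). *)
Definition step_rel (G : dgraph) : rel (dH G) :=
  fun h h' => vtx h == vtx (opp h').

Definition is_loop (G : dgraph) (s : seq (dH G)) : Prop :=
  s <> [::] /\ cycle (@step_rel G) s.

Definition trav (G : dgraph) (s : seq (dH G)) (h : dH G) : int :=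
  (Posz (count_mem h s) - Posz (count_mem (opp h) s)).

Definition is_lambda (F : fieldExtType rat) (G : dgraph) (w : dH G -> F)
    (s : seq (dH G)) (lam : F) : Prop :=
  forall h, tpair lam (w h) = (trav s h)%:~R.

Definition edge_disjoint (G : dgraph) (s1 s2 : seq (dH G)) : Prop :=
  forall h, h \in s1 -> (h \notin s2) && (opp h \notin s2).

Definition simple_loop (G : dgraph) (s : seq (dH G)) : Prop :=
  uniq [seq vtx h | h <- s].

(* For a simple loop s and h in s, h is the cusp gamma^in(vtx h) through which
   s enters the component vtx h, and opp (next s h) is the cusp gamma^out(vtx h)
   through which it leaves it. *)
Definition loop_in (G : dgraph) (s : seq (dH G)) (h : dH G) : dH G := h.
Definition loop_out (G : dgraph) (s : seq (dH G)) (h : dH G) : dH G := opp (next s h).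

(* An element of S_Q(F) is represented by a formal sum  sum_i a_i (x) b_i
   (a list of pairs).  The pairing with r (x) r in Sym_Q(F) is
   sum_i <a_i,r><b_i,r>; N(S) is the annihilator of W(S) = span{r (x) r}. *)
Definition in_N (F : fieldExtType rat) (G : dgraph) (w : dH G -> F)
    (a : seq (F * F)) : Prop :=
  forall h, (\sum_(p <- a) tpair p.1 (w h) * tpair p.2 (w h)) = 0.

Definition cross_count (G : dgraph) (m : nat) (k : nat -> dH G) (h : dH G) : rat :=
  ((\sum_(j < m) (k j == h))%:Z - (\sum_(j < m) (k j == opp h))%:Z)%:~R.

Local Close Scope ring_scope.
Local Open Scope R_scope.

Definition rat2C (q : rat) : C := RtoC (ratr q).

Definition Cexp (z : C) : C :=
  (exp (fst z) * cos (snd z), exp (fst z) * sin (snd z))%R.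

(* A point X of the stratum: each component is P^1, in an affine coordinate
   in which no cusp is at infinity; pos h is the coordinate of the cusp h
   on the component vtx h. *)
Definition stratum_point (G : dgraph) (pos : dH G -> C) : Prop :=
  forall h h', vtx h = vtx h' -> h <> h' -> pos h <> pos h'.

Definition res (F : fieldExtType rat) (G : dgraph) (w : dH G -> F) (alpha : F)
    (h : dH G) : C := rat2C (tpair alpha (w h)).

Definition omega (F : fieldExtType rat) (G : dgraph) (w : dH G -> F) (alpha : F)
    (pos : dH G -> C) (v : dV G) (z : C) : C :=
  \big[Cplus/(RtoC 0)]_(h | vtx h == v) Cdiv (res w alpha h) (Cminus z (pos h)).

Definition seg_integral (f : C -> C) (sigma dsigma : R -> C) : C :=
  (RInt (fun t => fst (Cmult (f (sigma t)) (dsigma t))) 0 1,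
   RInt (fun t => snd (Cmult (f (sigma t)) (dsigma t))) 0 1).

(* A closed path on X, avoiding the nodes where omega_X (for alpha) has a pole,
   whose algebraic intersection number with the node of head-weight w h is
   <beta, w h>.  It is described by m crossings k 0, ..., k (m-1) (crossing j
   goes through the node {k j, opp k j}, from the branch k j to the branch
   opp (k j)) and m segments: segment j is a C^1 path sigma j (derivative
   dsigma j) on the component vtx (k j), from the cusp opp (k (j-1 mod m))
   to the cusp k j, avoiding the poles of omega_X.  The intersection number
   with the node oriented with head h counts crossings leaving the branch h
   positively. *)
Definition prev_index (m j : nat) : nat := modn (j + m).-1 m.

Definition path_on_X (F : fieldExtType rat) (G : dgraph) (w : dH G -> F)
    (pos : dH G -> C) (alpha beta : F)
    (m : nat) (k : nat -> dH G) (sigma dsigma : nat -> R -> C) : Prop :=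
  (forall j, leq j.+1 m ->
     [/\ vtx (opp (k (prev_index m j))) = vtx (k j),
         sigma j 0%R = pos (opp (k (prev_index m j))),
         sigma j 1%R = pos (k j),
         tpair alpha (w (k j)) = (0 : rat) &
         forall t, (0 <= t <= 1)%R ->
           [/\ is_derive (fun u => fst (sigma j u)) t (fst (dsigma j t)),
               is_derive (fun u => snd (sigma j u)) t (snd (dsigma j t)),
               continuous (fun u => fst (dsigma j u)) t,
               continuous (fun u => snd (dsigma j u)) t &
               forall h, vtx h = vtx (k j) -> tpair alpha (w h) <> (0 : rat) ->
                 sigma j t <> pos h]]) /\
  (forall h,
     cross_count m k h = tpair beta (w h)).

Definition path_integral (F : fieldExtType rat) (G : dgraph) (w : dH G -> F)
    (pos : dH G -> C) (alpha : F)
    (m : nat) (k : nat -> dH G) (sigma dsigma : nat -> R -> C) : C :=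
  \big[Cplus/(RtoC 0)]_(j < m)
     seg_integral (omega w alpha pos (vtx (k j))) (sigma j) (dsigma j).

Definition cross_ratio (a b c d : C) : C :=
  Cdiv (Cmult (Cminus a c) (Cminus b d)) (Cmult (Cminus a d) (Cminus b c)).

(* product over the common vertices v of two simple loops of
   [g1out(v), g1in(v), g2out(v), g2in(v)]; a common vertex v corresponds to
   the unique pair (h1 in s1, h2 in s2) with vtx h1 = vtx h2 = v. *)
Definition cross_ratio_product (G : dgraph) (pos : dH G -> C)
    (s1 s2 : seq (dH G)) : C :=
  \big[Cmult/(RtoC 1)]_(h1 <- s1) \big[Cmult/(RtoC 1)]_(h2 <- s2 | vtx h1 == vtx h2)
     cross_ratio (pos (loop_out s1 h1)) (pos (loop_in s1 h1))
                 (pos (loop_out s2 h2)) (pos (loop_in s2 h2)).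

(* Main.v *)
From Stdlib Require Import Reals Lra.
From Coquelicot Require Import Coquelicot.

Section Analysis.
Local Open Scope R_scope.
Definition clamp (u:R) : R := Rmax 0 (Rmin 1 u).

Lemma clamp_id u : 0 <= u <= 1 -> clamp u = u.
Proof. intros H; unfold clamp, Rmax, Rmin; repeat destruct Rle_dec; lra. Qed.

Lemma clamp_in u : 0 <= clamp u <= 1.
Proof. unfold clamp, Rmax, Rmin; repeat destruct Rle_dec; lra. Qed.

Lemma clamp_lip u v : Rabs (clamp u - clamp v) <= Rabs (u - v).
Proof. unfold clamp, Rmax, Rmin, Rabs; repeat destruct Rle_dec; repeat destruct Rcase_abs; lra. Qed.

Lemma clamp_cont u : continuity_pt clamp u.
Proof.
  intros eps Heps. exists eps; split; [lra|].
  intros v [_ Hv]. simpl in *. unfold R_dist in *.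
  eapply Rle_lt_trans; [apply clamp_lip|exact Hv].
Qed.

Lemma dmul f g x lf lg : derivable_pt_lim f x lf -> derivable_pt_lim g x lg ->
  derivable_pt_lim (fun t => f t * g t) x (lf * g x + f x * lg).
Proof. intros; apply (derivable_pt_lim_mult f g); auto. Qed.
Lemma dplus f g x lf lg : derivable_pt_lim f x lf -> derivable_pt_lim g x lg ->
  derivable_pt_lim (fun t => f t + g t) x (lf + lg).
Proof. intros; apply (derivable_pt_lim_plus f g); auto. Qed.
Lemma dminus f g x lf lg : derivable_pt_lim f x lf -> derivable_pt_lim g x lg ->
  derivable_pt_lim (fun t => f t - g t) x (lf - lg).
Proof. intros; apply (derivable_pt_lim_minus f g); auto. Qed.
Lemma dcomp (h f : R -> R) x lf lh : derivable_pt_lim f x lf -> derivable_pt_lim h (f x) lh ->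
  derivable_pt_lim (fun t => h (f t)) x (lh * lf).
Proof. intros; apply (derivable_pt_lim_comp f h); auto. Qed.

Lemma cplus f g x : continuity_pt f x -> continuity_pt g x -> continuity_pt (fun t => f t + g t) x.
Proof. intros; apply (continuity_pt_plus f g); auto. Qed.
Lemma cminus f g x : continuity_pt f x -> continuity_pt g x -> continuity_pt (fun t => f t - g t) x.
Proof. intros; apply (continuity_pt_minus f g); auto. Qed.
Lemma cmul f g x : continuity_pt f x -> continuity_pt g x -> continuity_pt (fun t => f t * g t) x.
Proof. intros; apply (continuity_pt_mult f g); auto. Qed.
Lemma cdiv f g x : continuity_pt f x -> continuity_pt g x -> g x <> 0 -> continuity_pt (fun t => f t / g t) x.
Proof. intros; apply (continuity_pt_div f g); auto. Qed.

Section Core.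
Variables x y x' y' : R -> R.
Hypothesis Hx : forall t, 0 <= t <= 1 -> derivable_pt_lim x t (x' t).
Hypothesis Hy : forall t, 0 <= t <= 1 -> derivable_pt_lim y t (y' t).
Hypothesis Hx' : forall t, 0 <= t <= 1 -> continuity_pt x' t.
Hypothesis Hy' : forall t, 0 <= t <= 1 -> continuity_pt y' t.
Hypothesis HN : forall t, 0 <= t <= 1 -> x t * x t + y t * y t <> 0.

Definition g1 u := (x u * x' u + y u * y' u) / (x u * x u + y u * y u).
Definition g2 u := (x u * y' u - y u * x' u) / (x u * x u + y u * y u).
Definition G1 u := g1 (clamp u).
Definition G2 u := g2 (clamp u).

Lemma contx t : 0 <= t <= 1 -> continuity_pt x t.
Proof. intros H; apply derivable_continuous_pt; exists (x' t); apply Hx; exact H. Qed.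
Lemma conty t : 0 <= t <= 1 -> continuity_pt y t.
Proof. intros H; apply derivable_continuous_pt; exists (y' t); apply Hy; exact H. Qed.

Lemma cont_g1 t : 0 <= t <= 1 -> continuity_pt g1 t.
Proof.
  intros H; unfold g1. pose proof (contx _ H); pose proof (conty _ H).
  apply cdiv; [apply cplus; apply cmul|apply cplus; apply cmul|apply HN]; auto.
Qed.
Lemma cont_g2 t : 0 <= t <= 1 -> continuity_pt g2 t.
Proof.
  intros H; unfold g2. pose proof (contx _ H); pose proof (conty _ H).
  apply cdiv; [apply cminus; apply cmul|apply cplus; apply cmul|apply HN]; auto.
Qed.

Lemma cont_G1 u : continuous G1 u.
Proof.
  apply continuity_pt_filterlim. unfold G1.
  apply (continuity_pt_comp clamp g1); [apply clamp_cont| apply cont_g1, clamp_in].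
Qed.
Lemma cont_G2 u : continuous G2 u.
Proof.
  apply continuity_pt_filterlim. unfold G2.
  apply (continuity_pt_comp clamp g2); [apply clamp_cont| apply cont_g2, clamp_in].
Qed.

Definition Af t := RInt G1 0 t.
Definition Bf t := RInt G2 0 t.

Lemma dAf t : derivable_pt_lim Af t (G1 t).
Proof.
  apply is_derive_Reals. apply is_derive_RInt with 0.
  - apply filter_forall. intros b. unfold Af, Bf. apply (@RInt_correct R_CompleteNormedModule). apply ex_RInt_continuous.
    intros; apply cont_G1.
  - apply cont_G1.
Qed.
Lemma dBf t : derivable_pt_lim Bf t (G2 t).
Proof.
  apply is_derive_Reals. apply is_derive_RInt with 0.
  - apply filter_forall. intros b. unfold Af, Bf. apply (@RInt_correct R_CompleteNormedModule). apply ex_RInt_continuous.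
    intros; apply cont_G2.
  - apply cont_G2.
Qed.

Definition K1 t := exp (- Af t) * (x t * cos (Bf t) + y t * sin (Bf t)).
Definition K2 t := exp (- Af t) * (y t * cos (Bf t) - x t * sin (Bf t)).

Lemma dE t : derivable_pt_lim (fun t => exp (- Af t)) t (exp (- Af t) * (- G1 t)).
Proof.
  apply (dcomp exp (fun t => - Af t)).
  - apply (derivable_pt_lim_opp Af). apply dAf.
  - apply derivable_pt_lim_exp.
Qed.
Lemma dCos t : derivable_pt_lim (fun t => cos (Bf t)) t (- sin (Bf t) * G2 t).
Proof. apply (dcomp cos Bf). apply dBf. apply derivable_pt_lim_cos. Qed.
Lemma dSin t : derivable_pt_lim (fun t => sin (Bf t)) t (cos (Bf t) * G2 t).
Proof. apply (dcomp sin Bf). apply dBf. apply derivable_pt_lim_sin. Qed.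

Lemma dK1 t : 0 <= t <= 1 -> derivable_pt_lim K1 t 0.
Proof.
  intros H.
  assert (D := dmul _ _ _ _ _ (dE t)
     (dplus _ _ _ _ _ (dmul _ _ _ _ _ (Hx _ H) (dCos t)) (dmul _ _ _ _ _ (Hy _ H) (dSin t)))).
  unfold K1. match type of D with derivable_pt_lim _ _ ?l => replace 0 with l end; [exact D|].
  unfold G1, G2; rewrite clamp_id; auto. unfold g1, g2. field. apply HN; auto.
Qed.

Lemma dK2 t : 0 <= t <= 1 -> derivable_pt_lim K2 t 0.
Proof.
  intros H.
  assert (D := dmul _ _ _ _ _ (dE t)
     (dminus _ _ _ _ _ (dmul _ _ _ _ _ (Hy _ H) (dCos t)) (dmul _ _ _ _ _ (Hx _ H) (dSin t)))).
  unfold K2. match type of D with derivable_pt_lim _ _ ?l => replace 0 with l end; [exact D|].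
  unfold G1, G2; rewrite clamp_id; auto. unfold g1, g2. field. apply HN; auto.
Qed.

Lemma const01 (K : R -> R) : (forall t, 0 <= t <= 1 -> derivable_pt_lim K t 0) -> K 1 = K 0.
Proof.
  intros HK.
  assert (HI := is_RInt_derive K (fun _ => 0) 0 1).
  assert (HI' : is_RInt (fun _ => 0) 0 1 (minus (K 1) (K 0))).
  { apply HI.
    - intros t Ht. apply is_derive_Reals. apply HK.
      rewrite Rmin_left, Rmax_right in Ht; lra.
    - intros; apply continuous_const. }
  apply (@is_RInt_unique R_CompleteNormedModule) in HI'. rewrite RInt_const in HI'.
  unfold minus, plus, opp, scal in HI'; simpl in HI'. unfold mult in HI'; simpl in HI'.
  lra.
Qed.

Lemma core :
  exp (RInt g1 0 1) * cos (RInt g2 0 1) * x 0 - exp (RInt g1 0 1) * sin (RInt g2 0 1) * y 0 = x 1 /\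
  exp (RInt g1 0 1) * sin (RInt g2 0 1) * x 0 + exp (RInt g1 0 1) * cos (RInt g2 0 1) * y 0 = y 1.
Proof.
  assert (E1 : K1 1 = K1 0) by (apply const01; apply dK1).
  assert (E2 : K2 1 = K2 0) by (apply const01; apply dK2).
  assert (A0 : Af 0 = 0) by (unfold Af; apply (@RInt_point R_CompleteNormedModule)).
  assert (B0 : Bf 0 = 0) by (unfold Bf; apply (@RInt_point R_CompleteNormedModule)).
  assert (A1 : RInt g1 0 1 = Af 1).
  { unfold Af; apply (@RInt_ext R_CompleteNormedModule). intros u Hu. rewrite Rmin_left, Rmax_right in Hu; try lra.
    unfold G1; rewrite clamp_id; auto; lra. }
  assert (B1 : RInt g2 0 1 = Bf 1).
  { unfold Bf; apply (@RInt_ext R_CompleteNormedModule). intros u Hu. rewrite Rmin_left, Rmax_right in Hu; try lra.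
    unfold G2; rewrite clamp_id; auto; lra. }
  rewrite A1, B1.
  unfold K1, K2 in E1, E2. rewrite A0, B0, Ropp_0, exp_0, cos_0, sin_0 in E1, E2.
  set (a := Af 1) in *; set (b := Bf 1) in *.
  assert (SC := sin2_cos2 b). unfold Rsqr in SC.
  assert (EE : exp a * exp (- a) = 1) by (rewrite <- exp_plus; replace (a + - a) with 0 by ring; apply exp_0).
  assert (X0 : x 0 = exp (- a) * (x 1 * cos b + y 1 * sin b)) by (rewrite E1; ring).
  assert (Y0 : y 0 = exp (- a) * (y 1 * cos b - x 1 * sin b)) by (rewrite E2; ring).
  rewrite X0, Y0. split.
  - transitivity (exp a * exp (-a) * x 1 * (sin b * sin b + cos b * cos b)); [ring|]. rewrite EE, SC; ring.
  - transitivity (exp a * exp (-a) * y 1 * (sin b * sin b + cos b * cos b)); [ring|]. rewrite EE, SC; ring.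
Qed.
End Core.
Definition Cexp' (z : C) : C := (exp (fst z) * cos (snd z), exp (fst z) * sin (snd z)).

Definition seg_int (f : C -> C) (sigma dsigma : R -> C) : C :=
  (RInt (fun t => fst (Cmult (f (sigma t)) (dsigma t))) 0 1,
   RInt (fun t => snd (Cmult (f (sigma t)) (dsigma t))) 0 1).

Definition seg_ok (s ds : R -> C) (p : C) := forall t, 0 <= t <= 1 ->
  is_derive (fun u => fst (s u)) t (fst (ds t)) /\
  is_derive (fun u => snd (s u)) t (snd (ds t)) /\
  continuous (fun u => fst (ds u)) t /\
  continuous (fun u => snd (ds u)) t /\ s t <> p.

Lemma C_neq0 (z : C) : z <> (0,0) -> fst z * fst z + snd z * snd z <> 0.
Proof.
  destruct z as [a b]; simpl; intros H E. apply H.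
  assert (a = 0) by nra. assert (b = 0) by nra. subst; reflexivity.
Qed.

Lemma coreC s ds p : seg_ok s ds p ->
  ex_RInt (fun t => fst (Cmult (Cinv (Cminus (s t) p)) (ds t))) 0 1 /\
  ex_RInt (fun t => snd (Cmult (Cinv (Cminus (s t) p)) (ds t))) 0 1 /\
  Cmult (Cexp' (seg_int (fun z => Cinv (Cminus z p)) s ds)) (Cminus (s 0) p) = Cminus (s 1) p.
Proof.
  intros H.
  set (x := fun u => fst (s u) - fst p). set (y := fun u => snd (s u) - snd p).
  set (x' := fun u => fst (ds u)). set (y' := fun u => snd (ds u)).
  assert (Hx : forall t, 0 <= t <= 1 -> derivable_pt_lim x t (x' t)).
  { intros t Ht. destruct (H t Ht) as [D _]. apply is_derive_Reals in D.
    unfold x, x'. replace (fst (ds t)) with (fst (ds t) - 0) by ring.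
    apply (dminus (fun u => fst (s u)) (fun _ => fst p)); auto. apply derivable_pt_lim_const. }
  assert (Hy : forall t, 0 <= t <= 1 -> derivable_pt_lim y t (y' t)).
  { intros t Ht. destruct (H t Ht) as [_ [D _]]. apply is_derive_Reals in D.
    unfold y, y'. replace (snd (ds t)) with (snd (ds t) - 0) by ring.
    apply (dminus (fun u => snd (s u)) (fun _ => snd p)); auto. apply derivable_pt_lim_const. }
  assert (Hx' : forall t, 0 <= t <= 1 -> continuity_pt x' t).
  { intros t Ht. destruct (H t Ht) as [_ [_ [C _]]]. apply continuity_pt_filterlim. exact C. }
  assert (Hy' : forall t, 0 <= t <= 1 -> continuity_pt y' t).
  { intros t Ht. destruct (H t Ht) as [_ [_ [_ [C _]]]]. apply continuity_pt_filterlim. exact C. }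
  assert (HN : forall t, 0 <= t <= 1 -> x t * x t + y t * y t <> 0).
  { intros t Ht. destruct (H t Ht) as [_ [_ [_ [_ Np]]]].
    apply (C_neq0 (Cminus (s t) p)). intros E; apply Np.
    destruct (s t) as [a b], p as [c d]; unfold Cminus, Cplus, Copp in E; simpl in E.
    injection E; intros; f_equal; lra. }
  destruct (core x y x' y' Hx Hy Hx' Hy' HN) as [E1 E2].
  assert (Eq1 : forall t, 0 < t < 1 -> g1 x y x' y' t = fst (Cmult (Cinv (Cminus (s t) p)) (ds t))).
  { intros t Ht. assert (N := HN t (conj (Rlt_le _ _ (proj1 Ht)) (Rlt_le _ _ (proj2 Ht)))).
    unfold g1, x, y, x', y' in *. destruct (s t) as [a b], p as [c d], (ds t) as [e f].
    unfold Cminus, Cplus, Copp, Cinv, Cmult; simpl in *. field. intro Z; apply N; nra. }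
  assert (Eq2 : forall t, 0 < t < 1 -> g2 x y x' y' t = snd (Cmult (Cinv (Cminus (s t) p)) (ds t))).
  { intros t Ht. assert (N := HN t (conj (Rlt_le _ _ (proj1 Ht)) (Rlt_le _ _ (proj2 Ht)))).
    unfold g2, x, y, x', y' in *. destruct (s t) as [a b], p as [c d], (ds t) as [e f].
    unfold Cminus, Cplus, Copp, Cinv, Cmult; simpl in *. field. intro Z; apply N; nra. }
  assert (ex1 : ex_RInt (g1 x y x' y') 0 1).
  { apply (ex_RInt_ext (G1 x y x' y')). intros u Hu. rewrite Rmin_left, Rmax_right in Hu; try lra.
    unfold G1; rewrite clamp_id; auto; lra.
    apply (@ex_RInt_continuous R_CompleteNormedModule); intros; apply cont_G1; auto. }
  assert (ex2 : ex_RInt (g2 x y x' y') 0 1).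
  { apply (ex_RInt_ext (G2 x y x' y')). intros u Hu. rewrite Rmin_left, Rmax_right in Hu; try lra.
    unfold G2; rewrite clamp_id; auto; lra.
    apply (@ex_RInt_continuous R_CompleteNormedModule); intros; apply cont_G2; auto. }
  split; [|split].
  - apply (ex_RInt_ext (g1 x y x' y')); [|exact ex1].
    intros u Hu; rewrite Rmin_left, Rmax_right in Hu; try lra; apply Eq1; auto.
  - apply (ex_RInt_ext (g2 x y x' y')); [|exact ex2].
    intros u Hu; rewrite Rmin_left, Rmax_right in Hu; try lra; apply Eq2; auto.
  - assert (R1 : RInt (fun t => fst (Cmult (Cinv (Cminus (s t) p)) (ds t))) 0 1 = RInt (g1 x y x' y') 0 1).
    { symmetry; apply (@RInt_ext R_CompleteNormedModule).
      intros u Hu; rewrite Rmin_left, Rmax_right in Hu; try lra; apply Eq1; auto. }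
    assert (R2 : RInt (fun t => snd (Cmult (Cinv (Cminus (s t) p)) (ds t))) 0 1 = RInt (g2 x y x' y') 0 1).
    { symmetry; apply (@RInt_ext R_CompleteNormedModule).
      intros u Hu; rewrite Rmin_left, Rmax_right in Hu; try lra; apply Eq2; auto. }
    unfold seg_int. rewrite R1, R2. unfold Cexp', Cmult, Cminus, Cplus, Copp; simpl.
    replace (fst (s 1) + - fst p) with (x 1) by (unfold x; ring).
    replace (snd (s 1) + - snd p) with (y 1) by (unfold y; ring).
    rewrite <- E1, <- E2. unfold x, y. f_equal; ring.
Qed.
End Analysis.

Require Import Defs.
From HB Require Import structures.
From mathcomp Require Import all_boot all_order all_algebra all_field.
From mathcomp Require Import Rstruct.

Lemma Cexp'E z : Cexp' z = Cexp z. Proof. by []. Qed.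

Section IntR.
Local Open Scope ring_scope.
Definition ri (n : int) : R := n%:~R.
Lemma ri_pos k : ri (Posz k) = INR k.
Proof. by rewrite /ri INRE. Qed.
Lemma ri_neg k : ri (Negz k) = Ropp (INR k.+1).
Proof. by rewrite /ri NegzE mulrNz INRE. Qed.
Lemma ri0 : ri 0 = IZR Z0. Proof. by []. Qed.
End IntR.

Section CPart.
Local Open Scope R_scope.

Definition PW (z : C) (n : int) : C :=
  match n with Posz k => Cpow z k | Negz k => Cinv (Cpow z k.+1) end.

Lemma Cexp_nat k a b : Cexp (INR k * a, INR k * b) = Cpow (Cexp (a, b)) k.
Proof.
  elim: k => [|k IH].
  - rewrite /Cexp /=. rewrite !Rmult_0_l exp_0 cos_0 sin_0 /RtoC. f_equal; ring.
  - rewrite S_INR /=. rewrite -IH /Cexp /Cmult /=.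
    replace ((INR k + 1) * a) with (a + INR k * a) by ring.
    replace ((INR k + 1) * b) with (b + INR k * b) by ring.
    rewrite exp_plus cos_plus sin_plus. f_equal; ring.
Qed.

Lemma Cexp_opp a b : Cexp (- a, - b) = Cinv (Cexp (a, b)).
Proof.
  rewrite /Cexp /Cinv /= cos_neg sin_neg exp_Ropp.
  have E := exp_pos a. have SC := sin2_cos2 b. rewrite /Rsqr in SC.
  have D : (exp a * cos b) ^ 2 + (exp a * sin b) ^ 2 = exp a * exp a.
  { transitivity (exp a * exp a * (sin b * sin b + cos b * cos b)); [ring|]. rewrite SC; ring. }
  rewrite D. f_equal; field; lra.
Qed.

Lemma Cexp_int n a b : Cexp (ri n * a, ri n * b) = PW (Cexp (a, b)) n.
Proof.
  case: n => k.
  - by rewrite ri_pos Cexp_nat.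
  - rewrite ri_neg /PW -Cexp_nat -Cexp_opp. congr Cexp; congr pair; ring.
Qed.

Lemma Cexp0 : Cexp (RtoC 0) = RtoC 1.
Proof. rewrite /Cexp /RtoC /= exp_0 cos_0 sin_0. f_equal; ring. Qed.

Lemma Cexp_plus u v : Cexp (Cplus u v) = Cmult (Cexp u) (Cexp v).
Proof.
  case: u => a b; case: v => c d. rewrite /Cexp /Cplus /Cmult /=.
  rewrite exp_plus cos_plus sin_plus. f_equal; ring.
Qed.

Lemma Cminus_eq0 (z p : C) : Cminus z p = RtoC 0 -> z = p.
Proof. case: z => a b; case: p => c d. rewrite /Cminus /Cplus /Copp /RtoC /=. case=> ? ?. f_equal; lra. Qed.

Definition seg_basic (s ds : R -> C) := forall t, 0 <= t <= 1 ->
  is_derive (fun u => fst (s u)) t (fst (ds t)) /\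
  is_derive (fun u => snd (s u)) t (snd (ds t)) /\
  continuous (fun u => fst (ds u)) t /\
  continuous (fun u => snd (ds u)) t.

Definition term (c : R) (p : C) (s ds : R -> C) (t : R) : C :=
  Cmult (Cdiv (RtoC c) (Cminus (s t) p)) (ds t).

Lemma term_exp (n : int) (p : C) s ds : seg_basic s ds ->
  (n <> Posz 0 -> forall t, 0 <= t <= 1 -> s t <> p) ->
  ex_RInt (fun t => fst (term (ri n) p s ds t)) 0 1 /\
  ex_RInt (fun t => snd (term (ri n) p s ds t)) 0 1 /\
  Cexp (seg_integral (fun z => Cdiv (RtoC (ri n)) (Cminus z p)) s ds)
    = PW (Cdiv (Cminus (s 1) p) (Cminus (s 0) p)) n.
Proof.
  move=> Hb Hav.
  case: (eqVneq n (Posz 0)) => [->|nz].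
  - have Z1 : forall t, fst (term (ri 0) p s ds t) = 0.
    { move=> t. rewrite ri0 /term /Cdiv /Cmult /=. ring. }
    have Z2 : forall t, snd (term (ri 0) p s ds t) = 0.
    { move=> t. rewrite ri0 /term /Cdiv /Cmult /=. ring. }
    have EZ : forall f : R -> R, (forall t, f t = 0) -> ex_RInt f 0 1 /\ RInt f 0 1 = 0.
    { move=> f Hf. have -> : f = (fun _ => 0). by apply: FunctionalExtensionality.functional_extensionality.
      split. by apply: ex_RInt_const.
      rewrite RInt_const. rewrite /scal /= /mult /=. ring. }
    have [e1 r1] := EZ _ Z1. have [e2 r2] := EZ _ Z2.
    split; [exact e1|split; [exact e2|]].
    change (Cexp (RInt (fun t => fst (term (ri 0) p s ds t)) 0 1,
                  RInt (fun t => snd (term (ri 0) p s ds t)) 0 1) =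
            PW (Cdiv (Cminus (s 1) p) (Cminus (s 0) p)) 0).
    rewrite r1 r2 /Cexp /= exp_0 cos_0 sin_0 /RtoC. f_equal; ring.
  - have nz' : n <> Posz 0 by apply/eqP.
    have Hok : seg_ok s ds p.
    { move=> t Ht. have [a [b [c d]]] := Hb t Ht. split; [exact a|split; [exact b|split; [exact c|split; [exact d|]]]].
      exact: Hav nz' t Ht. }
    have [ex1 [ex2 E]] := coreC _ _ _ Hok.
    have F1 : (fun t => fst (term (ri n) p s ds t)) =
              (fun t => scal (ri n) (fst (Cmult (Cinv (Cminus (s t) p)) (ds t)))).
    { apply: FunctionalExtensionality.functional_extensionality => t.
      rewrite /term /Cdiv /scal /= /mult /=. ring. }
    have F2 : (fun t => snd (term (ri n) p s ds t)) =
              (fun t => scal (ri n) (snd (Cmult (Cinv (Cminus (s t) p)) (ds t)))).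
    { apply: FunctionalExtensionality.functional_extensionality => t.
      rewrite /term /Cdiv /scal /= /mult /=. ring. }
    split; [rewrite F1; exact: ex_RInt_scal|split; [rewrite F2; exact: ex_RInt_scal|]].
    change (Cexp (RInt (fun t => fst (term (ri n) p s ds t)) 0 1,
                  RInt (fun t => snd (term (ri n) p s ds t)) 0 1) =
            PW (Cdiv (Cminus (s 1) p) (Cminus (s 0) p)) n).
    rewrite F1 F2 (RInt_scal _ _ _ _ ex1) (RInt_scal _ _ _ _ ex2) /scal /= /mult /=.
    rewrite Cexp_int. congr PW. rewrite -E Cexp'E.
    have nz0 : Cminus (s 0) p <> RtoC 0.
    { move=> H1. apply: (Hav nz' 0); [lra|]. exact: Cminus_eq0. }
    rewrite /seg_int /seg_integral. set E0 := Cexp _. set T0 := Cminus (s 0) p. rewrite /Cdiv. rewrite -Cmult_assoc Cinv_r ?Cmult_1_r //.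
Qed.
End CPart.

Section SumPart.
Local Open Scope R_scope.

Lemma sum_exp (T : Type) (l : seq T) (c : T -> int) (q : T -> C) s ds :
  seg_basic s ds ->
  (forall i, List.In i l -> c i <> Posz 0 -> forall t, 0 <= t <= 1 -> s t <> q i) ->
  ex_RInt (fun t => fst (Cmult (\big[Cplus/RtoC 0]_(i <- l) Cdiv (RtoC (ri (c i))) (Cminus (s t) (q i))) (ds t))) 0 1 /\
  ex_RInt (fun t => snd (Cmult (\big[Cplus/RtoC 0]_(i <- l) Cdiv (RtoC (ri (c i))) (Cminus (s t) (q i))) (ds t))) 0 1 /\
  Cexp (seg_integral (fun z => \big[Cplus/RtoC 0]_(i <- l) Cdiv (RtoC (ri (c i))) (Cminus z (q i))) s ds)
  = \big[Cmult/RtoC 1]_(i <- l) PW (Cdiv (Cminus (s 1) (q i)) (Cminus (s 0) (q i))) (c i).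
Proof.
  move=> Hb. elim: l => [|i l IH] Hav.
  - have Z1 : (fun t => fst (Cmult (\big[Cplus/RtoC 0]_(i <- [::]) Cdiv (RtoC (ri (c i))) (Cminus (s t) (q i))) (ds t))) = (fun _ => 0).
    { apply: FunctionalExtensionality.functional_extensionality => t. rewrite big_nil /RtoC /Cmult /=. ring. }
    have Z2 : (fun t => snd (Cmult (\big[Cplus/RtoC 0]_(i <- [::]) Cdiv (RtoC (ri (c i))) (Cminus (s t) (q i))) (ds t))) = (fun _ => 0).
    { apply: FunctionalExtensionality.functional_extensionality => t. rewrite big_nil /RtoC /Cmult /=. ring. }
    rewrite Z1 Z2. split; [exact: ex_RInt_const|split; [exact: ex_RInt_const|]].
    rewrite /seg_integral Z1 Z2 RInt_const big_nil /scal /= /mult /= /Cexp /= /RtoC.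
    rewrite Rmult_0_r exp_0 cos_0 sin_0. f_equal; ring.
  - have Hav' : forall j, List.In j l -> c j <> Posz 0 -> forall t, 0 <= t <= 1 -> s t <> q j.
    { move=> j Hj. apply: Hav. by right. }
    have [e1 [e2 E]] := IH Hav'.
    have [f1 [f2 F]] := term_exp (c i) (q i) s ds Hb (Hav i (or_introl erefl)).
    set S := fun t => \big[Cplus/RtoC 0]_(i <- l) Cdiv (RtoC (ri (c i))) (Cminus (s t) (q i)).
    have D1 : (fun t => fst (Cmult (\big[Cplus/RtoC 0]_(j <- i :: l) Cdiv (RtoC (ri (c j))) (Cminus (s t) (q j))) (ds t)))
       = (fun t => plus (fst (term (ri (c i)) (q i) s ds t)) (fst (Cmult (S t) (ds t)))).
    { apply: FunctionalExtensionality.functional_extensionality => t.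
      rewrite big_cons /S /term /plus /=. ring. }
    have D2 : (fun t => snd (Cmult (\big[Cplus/RtoC 0]_(j <- i :: l) Cdiv (RtoC (ri (c j))) (Cminus (s t) (q j))) (ds t)))
       = (fun t => plus (snd (term (ri (c i)) (q i) s ds t)) (snd (Cmult (S t) (ds t)))).
    { apply: FunctionalExtensionality.functional_extensionality => t.
      rewrite big_cons /S /term /plus /=. ring. }
    rewrite D1 D2. split; [exact: ex_RInt_plus|split; [exact: ex_RInt_plus|]].
    rewrite /seg_integral D1 D2 (RInt_plus _ _ _ _ f1 e1) (RInt_plus _ _ _ _ f2 e2) big_cons.
    rewrite -F -E -Cexp_plus. done.
Qed.
End SumPart.

From mathcomp Require Import ring.
From mathcomp.real_closed Require Import complex.
Set Implicit Arguments. Unset Strict Implicit. Unset Printing Implicit Defensive.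
Import GRing.Theory Num.Theory.
Section Alg.
Local Open Scope ring_scope.
Variable K : fieldType.

Lemma prod_image (T : finType) (s : seq T) (f : T -> T) (Q : pred T) (F : T -> K) :
  uniq s -> injective f -> (forall h, Q h = (h \in [seq f x | x <- s])) ->
  \prod_(h | Q h) F h = \prod_(x <- s) F (f x).
Proof.
  move=> us inj HQ. rewrite -(big_map f predT F) big_uniq; last by rewrite map_inj_uniq.
  by apply: eq_bigl => h; rewrite HQ.
Qed.

Lemma expo4 (y : K) (a1 b1 a2 b2 : bool) :
  (y != 0) || ~~ [|| a1 && a2, b1 && b2, a1 && b2 | b1 && a2] ->
  y ^ ((a1%:Z - b1%:Z) * (a2%:Z - b2%:Z)) =
  (if a1 && a2 then y else 1) * (if b1 && b2 then y else 1) /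
  ((if a1 && b2 then y else 1) * (if b1 && a2 then y else 1)).
Proof.
  case/orP => [ny|].
  - case: a1; case: b1; case: a2; case: b2;
      rewrite /= ?subrr ?subr0 ?sub0r ?mulr0 ?mul0r ?mulr1 ?mul1r ?mulrNN ?mulN1r ?mulrN1
        ?expr0z ?expr1z ?exprN1; rewrite ?invr1 ?divr1 //; first [done | by field].
  - case: a1; case: b1; case: a2; case: b2 => //= _;
      rewrite ?subrr ?subr0 ?sub0r ?mulr0 ?mul0r ?expr0z ?mulr1 ?invr1 ?mul1r //.
Qed.

Section Graph.
Variable G : dgraph.
Variable P : dH G -> K.
Hypothesis oppK : forall h : dH G, Defs.opp (Defs.opp h) = h.
Hypothesis Pinj : forall h h' : dH G, vtx h = vtx h' -> P h = P h' -> h = h'.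

Lemma opp_inj : injective (@Defs.opp G).
Proof. exact: (can_inj oppK). Qed.

Definition onext (s : seq (dH G)) h := Defs.opp (next s h).

Lemma onext_inj s : uniq s -> injective (onext s).
Proof. move=> us x y /opp_inj. exact: (can_inj (prev_next us)). Qed.

Lemma onext_mem s h : uniq s -> (Defs.opp h \in s) = (h \in [seq onext s x | x <- s]).
Proof.
  move=> us. apply/idP/mapP.
  - move=> hs. exists (prev s (Defs.opp h)); first by rewrite mem_prev.
    by rewrite /onext next_prev // oppK.
  - case=> x xs ->. by rewrite /onext oppK mem_next.
Qed.

Lemma onext_vtx s h : cycle (@step_rel G) s -> h \in s -> vtx (onext s h) = vtx h.
Proof. move=> cs hs. have := next_cycle cs hs. by rewrite /step_rel => /eqP ->. Qed.

Lemma DP (s1 s2 : seq (dH G)) (A B : pred (dH G)) (f g : dH G -> dH G) (y : dH G -> dH G -> K) :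
  uniq s1 -> uniq s2 -> injective f -> injective g ->
  (forall h, A h = (h \in [seq f x | x <- s1])) -> (forall h, B h = (h \in [seq g x | x <- s2])) ->
  {in s1, forall h, vtx (f h) = vtx h} -> {in s2, forall h, vtx (g h) = vtx h} ->
  \prod_x \prod_(h | vtx h == vtx x) (if A h && B x then y x h else 1)
  = \prod_(h1 <- s1) \prod_(h2 <- s2 | vtx h1 == vtx h2) y (g h2) (f h1).
Proof.
  move=> u1 u2 fi gi HA HB vf vg.
  transitivity (\prod_(h | A h) \prod_(x | B x) (if vtx h == vtx x then y x h else 1)).
  { rewrite (eq_bigr (fun x => \prod_h (if vtx h == vtx x then (if A h && B x then y x h else 1) else 1)));
      last by move=> x _; rewrite big_mkcond.
    rewrite exchange_big /= [RHS]big_mkcond /=. apply: eq_bigr => h _.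
    case: (boolP (A h)) => Ah.
    - rewrite [RHS]big_mkcond /=. apply: eq_bigr => x _.
      by case: (B x); case: (vtx h == vtx x).
    - rewrite big1 // => x _. by case: ifP. }
  rewrite (prod_image _ u1 fi HA). rewrite big_seq [RHS]big_seq. apply: eq_bigr => h1 h1s.
  rewrite (prod_image _ u2 gi HB) [RHS]big_mkcond big_seq [RHS]big_seq.
  apply: eq_bigr => h2 h2s. by rewrite vf // vg.
Qed.

Definition tt (s : seq (dH G)) h : int := (h \in s)%:Z - (Defs.opp h \in s)%:Z.
Definition CRK (a b c d : K) := (a - c) * (b - d) / ((a - d) * (b - c)).

Lemma CRKE a b c d : CRK a b c d = (d - b) * (c - a) / ((c - b) * (d - a)).
Proof. rewrite /CRK. congr (_ / _); ring. Qed.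

Lemma alg s1 s2 : uniq s1 -> uniq s2 -> cycle (@step_rel G) s1 -> cycle (@step_rel G) s2 ->
  edge_disjoint s1 s2 ->
  \prod_x \prod_(h | vtx h == vtx x) (P x - P h) ^ (tt s1 h * tt s2 x)
  = \prod_(h1 <- s1) \prod_(h2 <- s2 | vtx h1 == vtx h2)
      CRK (P (onext s1 h1)) (P h1) (P (onext s2 h2)) (P h2).
Proof.
  move=> u1 u2 c1 c2 ed.
  have E : forall x h, vtx h == vtx x -> (P x - P h) ^ (tt s1 h * tt s2 x) =
     (if (h \in s1) && (x \in s2) then P x - P h else 1) *
     (if (Defs.opp h \in s1) && (Defs.opp x \in s2) then P x - P h else 1) /
     ((if (h \in s1) && (Defs.opp x \in s2) then P x - P h else 1) *
      (if (Defs.opp h \in s1) && (x \in s2) then P x - P h else 1)).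
  { move=> x h /eqP vh. rewrite /tt. apply: expo4.
    case: (eqVneq (P x - P h) 0) => [/eqP|] //=. rewrite subr_eq0 => /eqP Pe.
    have xh : x = h by apply: Pinj.
    subst x. apply/negP => /or4P [] /andP [Ha Hb].
    - by move: (ed _ Ha); rewrite Hb.
    - by move: (ed _ Ha); rewrite ?oppK Hb ?andbF.
    - by move: (ed _ Ha); rewrite Hb ?andbF.
    - by move: (ed _ Ha); rewrite ?oppK Hb ?andbF. }
  rewrite (eq_bigr (fun x => \prod_(h | vtx h == vtx x)
     ((if (h \in s1) && (x \in s2) then P x - P h else 1) *
     (if (Defs.opp h \in s1) && (Defs.opp x \in s2) then P x - P h else 1) /
     ((if (h \in s1) && (Defs.opp x \in s2) then P x - P h else 1) *
      (if (Defs.opp h \in s1) && (x \in s2) then P x - P h else 1)))));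
    last by move=> x _; apply: eq_bigr => h; exact: E.
  under eq_bigr => x _ do rewrite prodf_div !big_split /=.
  rewrite prodf_div !big_split /=.
  have iid : injective (@idfun (dH G)) by [].
  have mid : forall (s : seq (dH G)) h, (h \in s) = (h \in [seq idfun x | x <- s]) by move=> s h; rewrite map_id_in.
  have vid : forall s : seq (dH G), {in s, forall h, vtx (idfun h) = vtx h} by [].
  rewrite (DP (A := fun h => h \in s1) (B := fun x => x \in s2) (fun x h => P x - P h)
    u1 u2 iid iid (mid s1) (mid s2) (vid s1) (vid s2)).
  rewrite (DP (A := fun h => Defs.opp h \in s1) (B := fun x => Defs.opp x \in s2) (fun x h => P x - P h)
    u1 u2 (onext_inj u1) (onext_inj u2) (fun h => onext_mem h u1) (fun h => onext_mem h u2)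
    (fun h => onext_vtx c1) (fun h => onext_vtx c2)).
  rewrite (DP (A := fun h => h \in s1) (B := fun x => Defs.opp x \in s2) (fun x h => P x - P h)
    u1 u2 iid (onext_inj u2) (mid s1) (fun h => onext_mem h u2)
    (vid s1) (fun h => onext_vtx c2)).
  rewrite (DP (A := fun h => Defs.opp h \in s1) (B := fun x => x \in s2) (fun x h => P x - P h)
    u1 u2 (onext_inj u1) iid (fun h => onext_mem h u1) (mid s2)
    (fun h => onext_vtx c1) (vid s2)).
  under [RHS]eq_bigr => h1 _ do (under eq_bigr => h2 _ do rewrite CRKE; rewrite prodf_div !big_split /=).
  by rewrite prodf_div !big_split /=.
Qed.

Lemma prod_count (F : dH G -> K) m (k : nat -> dH G) :
  \prod_(j < m) F (k j) = \prod_x F x ^+ (\sum_(j < m) (k j == x))%N.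
Proof.
  elim: m => [|m IH].
  - rewrite big_ord0. rewrite big1 // => x _. by rewrite big_ord0 expr0.
  - rewrite big_ord_recr /= IH.
    rewrite [RHS](eq_bigr (fun x => F x ^+ (\sum_(j < m) (k j == x))%N * F x ^+ (k m == x))); last first.
    { move=> x _. by rewrite big_ord_recr /= exprD. }
    rewrite big_split /=. congr (_ * _).
    rewrite (bigD1 (k m)) //= eqxx expr1 big1 ?mulr1 // => x /negbTE.
    by rewrite eq_sym => ->; rewrite expr0.
Qed.

Lemma prod_prev (F : nat -> K) m : \prod_(j < m) F (prev_index m j) = \prod_(j < m) F j.
Proof.
  case: m => [|m']; first by rewrite !big_ord0.
  have lt : forall j : 'I_m'.+1, ((j + m') %% m'.+1 < m'.+1)%N by move=> j; rewrite ltn_mod.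
  pose pr (j : 'I_m'.+1) := Ordinal (lt j).
  have pinj : injective pr.
  { move=> a b /(congr1 val) /= /eqP. rewrite eqn_modDr !modn_small // => /eqP; apply: val_inj. }
  rewrite [RHS](reindex_inj pinj) /=. apply: eq_bigr => j _.
  by rewrite /prev_index addnS.
Qed.

Lemma prodXz (I : Type) (r : seq I) (Q : pred I) (F : I -> K) (n : int) :
  \prod_(i <- r | Q i) F i ^ n = (\prod_(i <- r | Q i) F i) ^ n.
Proof.
  symmetry. apply: (big_morph (fun y => y ^ n)). by move=> a b; rewrite /= expfzMl. exact: exp1rz.
Qed.

Lemma alg2 (t1 : dH G -> int) (m : nat) (k : nat -> dH G) (t2 : dH G -> int) :
  (forall h, t1 (Defs.opp h) = - t1 h) ->
  (forall j, (j < m)%N -> vtx (Defs.opp (k (prev_index m j))) = vtx (k j)) ->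
  (forall j, (j < m)%N -> t1 (k j) = 0) ->
  (forall h, t2 h = (\sum_(j < m) (k j == h))%N%:Z - (\sum_(j < m) (k j == Defs.opp h))%N%:Z) ->
  \prod_(j < m) \prod_(h | vtx h == vtx (k j))
      ((P (k j) - P h) / (P (Defs.opp (k (prev_index m j))) - P h)) ^ (t1 h)
  = \prod_x \prod_(h | vtx h == vtx x) (P x - P h) ^ (t1 h * t2 x).
Proof.
  move=> Hopp Hv Hk Ht2.
  pose Phi x := \prod_(h | vtx h == vtx x) (P x - P h) ^ (t1 h).
  have Phi0 : forall x, t1 x = 0 -> Phi x != 0.
  { move=> x tx. apply/prodf_neq0 => h /eqP vh. rewrite expfz_eq0 negb_and.
    case: (eqVneq h x) => [->|hx]; first by rewrite tx eqxx.
    apply/orP; right. rewrite subr_eq0. apply/eqP => Pe. apply: (negP hx). apply/eqP. by apply: Pinj. }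
  have divX : forall (a b : K) (n : int), (a / b) ^ n = a ^ n / b ^ n.
  { move=> a b n. by rewrite expfzMl exprz_inv invr_expz. }
  rewrite (eq_bigr (fun j : 'I_m => Phi (k j) / Phi (Defs.opp (k (prev_index m j))))); last first.
  { move=> j _. rewrite /Phi. under eq_bigr => h _ do rewrite divX. rewrite prodf_div. congr (_ / _).
    apply: eq_bigl => h. by rewrite (Hv j (ltn_ord j)). }
  rewrite prodf_div (prod_prev (fun j => Phi (Defs.opp (k j)))).
  rewrite (prod_count Phi m k) (prod_count (fun x => Phi (Defs.opp x)) m k).
  rewrite [X in _ / X](reindex_inj opp_inj) /=.
  rewrite -prodf_div. apply: eq_bigr => x _.
  under [RHS]eq_bigr => h _ do rewrite -exprz_exp. rewrite prodXz -/(Phi x) Ht2 oppK.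
  case: (eqVneq (t1 x) 0) => tx.
  - have nz := Phi0 x tx. rewrite expfzDr // -exprnN. done.
  - have n0 : forall y, t1 y != 0 -> (\sum_(j < m) (k j == y))%N = 0%N.
    { move=> y ty. apply: big1 => j _. apply/eqP; rewrite eqb0. apply/eqP => kj.
      by rewrite -kj Hk in ty. }
    rewrite !n0 //; last by rewrite Hopp oppr_eq0.
    by rewrite !expr0 subrr expr0z invr1 mulr1.
Qed.

End Graph.
End Alg.

Section Phi.
Local Open Scope ring_scope.
Local Open Scope complex_scope.

Definition phi (z : C) : R[i] := Complex z.1 z.2.

Lemma phiM a b : phi (Cmult a b) = phi a * phi b.
Proof. by case: a => a1 a2; case: b => b1 b2. Qed.

Lemma phi1 : phi (RtoC (IZR (Zpos xH))) = 1.
Proof. by []. Qed.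

Lemma phiB a b : phi (Cminus a b) = phi a - phi b.
Proof. by case: a => a1 a2; case: b => b1 b2. Qed.

Lemma phiV a : phi (Cinv a) = (phi a)^-1.
Proof.
  case: a => a1 a2. rewrite /phi /Cinv /=.
  have -> : (a1 +i* a2)^-1 = (a1 / (a1 ^+ 2 + a2 ^+ 2)) -i* (a2 / (a1 ^+ 2 + a2 ^+ 2)) by [].
  rewrite !RdivE !RplusE !RmultE !RoppE. by rewrite !mulr1 !expr2 -mulNr.
Qed.

Lemma phiD a b : phi (Cdiv a b) = phi a / phi b.
Proof. by rewrite /Cdiv phiM phiV. Qed.

Lemma phiPow z n : phi (Cpow z n) = phi z ^+ n.
Proof. elim: n => [|n IH] //=. by rewrite phiM IH exprS. Qed.

Lemma phiPW z n : phi (PW z n) = phi z ^ n.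
Proof. case: n => k; rewrite /PW; first exact: phiPow. by rewrite phiV phiPow. Qed.

Lemma phi_inj a b : phi a = phi b -> a = b.
Proof. case: a => a1 a2; case: b => b1 b2. by case=> -> ->. Qed.

Lemma phi_big (I : Type) (r : seq I) (Q : pred I) (F : I -> C) :
  phi (\big[Cmult/RtoC (IZR (Zpos xH))]_(i <- r | Q i) F i) = \prod_(i <- r | Q i) phi (F i).
Proof. apply: (big_morph phi phiM phi1). Qed.

Lemma phiCR a b c d : phi (cross_ratio a b c d) = CRK (phi a) (phi b) (phi c) (phi d).
Proof. by rewrite /cross_ratio phiD !phiM !phiB. Qed.
End Phi.

Lemma In_mem (T : eqType) (x : T) (s : seq T) : List.In x s -> x \in s.
Proof.
  elim: s => //= a s IH [->|/IH]; first by rewrite inE eqxx.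
  by rewrite inE => ->; rewrite orbT.
Qed.

Unset Implicit Arguments.
Local Open Scope ring_scope.

Theorem lemma2p2
  (g : nat) (F : fieldExtType rat) (b : 'I_g -> F)
  (G : dgraph) (w : dH G -> F)
  (s1 s2 : seq (dH G)) (lam1 lam2 : F) :
  totally_real_field_of_degree g F ->
  lattice_basis b ->
  weighted_stratum b w ->
  is_loop s1 -> is_loop s2 -> edge_disjoint s1 s2 ->
  is_lambda w s1 lam1 -> is_lambda w s2 lam2 ->
  in_N w [:: (lam1, lam2)] /\
  (simple_loop s1 -> simple_loop s2 ->
   forall (pos : dH G -> C), stratum_point pos ->
   forall (m : nat) (k : nat -> dH G) (sigma dsigma : nat -> R -> C),
     path_on_X w pos lam1 lam2 m k sigma dsigma ->
     Cexp (path_integral w pos lam1 m k sigma dsigma)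
       = cross_ratio_product pos s1 s2).
Proof.
  move=> _ _ [Hopp _ _ _ _] [_ cyc1] [_ cyc2] ed L1 L2.
  have oppK : forall h : dH G, Defs.opp (Defs.opp h) = h by move=> h; case: (Hopp h).
  have travO : forall (s : seq (dH G)) (h : dH G), trav s (Defs.opp h) = - trav s h.
  { move=> s h. by rewrite /trav oppK opprB. }
  have disj : forall h, (trav s1 h == 0) || (trav s2 h == 0).
  { move=> h. case: (boolP (h \in s1)) => [h1|h1].
    - have /andP [n1 n2] := ed h h1. apply/orP; right.
      by rewrite /trav (count_memPn n1) (count_memPn n2).
    - case: (boolP (Defs.opp h \in s1)) => [h1'|h1'].
      + have /andP [n1 n2] := ed _ h1'. rewrite oppK in n2. apply/orP; right.
        by rewrite /trav (count_memPn n1) (count_memPn n2).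
      + apply/orP; left. by rewrite /trav (count_memPn h1) (count_memPn h1'). }
  split.
  { move=> h. rewrite big_seq1 /= (L1 h) (L2 h) -intrM. apply/eqP. rewrite intr_eq0 mulf_eq0.
    exact: disj. }
  move=> sim1 sim2 pos Hpos m k sigma dsigma [Hpath Hcross].
  have u1 : uniq s1 := map_uniq sim1.
  have u2 : uniq s2 := map_uniq sim2.
  apply: phi_inj.
  pose P := fun h => phi (pos h).
  have Pinj : forall h h', vtx h = vtx h' -> P h = P h' -> h = h'.
  { move=> h h' vh /phi_inj pe. case: (eqVneq h h') => // /eqP ne. by case: (Hpos h h' vh ne). }
  rewrite /path_integral (big_morph Cexp Cexp_plus Cexp0) phi_big.
  rewrite (eq_bigr (fun j : 'I_m => \prod_(h | vtx h == vtx (k j))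
      ((P (k j) - P h) / (P (Defs.opp (k (prev_index m j))) - P h)) ^ (trav s1 h))); last first.
  { move=> j _. have [Hv S0 S1 Tk Ht] := Hpath j (ltn_ord j).
    pose l := [seq h <- index_enum (dH G) | vtx h == vtx (k j)].
    have Om : omega w lam1 pos (vtx (k j)) = fun z =>
       \big[Cplus/RtoC (IZR Z0)]_(h <- l) Cdiv (RtoC (ri (trav s1 h))) (Cminus z (pos h)).
    { apply: FunctionalExtensionality.functional_extensionality => z.
      rewrite /omega big_filter. apply: eq_bigr => h _. by rewrite /res /rat2C L1 ratr_int. }
    rewrite Om.
    have Hb : seg_basic (sigma j) (dsigma j).
    { move=> t Ht01. have [a1 a2 a3 a4 _] := Ht t Ht01. by split; [|split; [|split]]. }
    have Hav : forall i, List.In i l -> trav s1 i <> Posz 0 -> forall t, Rle (IZR Z0) t /\ Rle t (IZR (Zpos xH)) -> sigma j t <> pos i.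
    { move=> i /In_mem; rewrite mem_filter => /andP [/eqP vi _] ti t Ht01.
      have [_ _ _ _ H] := Ht t Ht01. apply: H => //. rewrite L1. move/eqP. rewrite intr_eq0.
      by apply/negP; apply/eqP. }
    have [_ [_ E]] := sum_exp _ l (trav s1) pos _ _ Hb Hav.
    rewrite E phi_big /l big_filter. apply: eq_bigr => h _.
    by rewrite phiPW phiD !phiB S0 S1. }
  have Hv' : forall j, (j < m)%N -> vtx (Defs.opp (k (prev_index m j))) = vtx (k j).
  { move=> j jm. by have [Hv _ _ _ _] := Hpath j jm. }
  have Hk' : forall j, (j < m)%N -> trav s1 (k j) = 0.
  { move=> j jm. have [_ _ _ Tk _] := Hpath j jm. move: Tk. rewrite L1. move/eqP. rewrite intr_eq0. by move/eqP. }
  have Ht2 : forall h, trav s2 h = (\sum_(j < m) (k j == h))%N%:Z - (\sum_(j < m) (k j == Defs.opp h))%N%:Z.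
  { move=> h. apply: (@intr_inj rat). rewrite -L2 -Hcross /cross_count. by []. }
  rewrite (alg2 oppK Pinj (travO s1) Hv' Hk' Ht2).
  have TT : forall s : seq (dH G), uniq s -> forall h, trav s h = tt s h.
  { move=> s us h. by rewrite /trav /tt !count_uniq_mem. }
  under eq_bigr => x _ do under eq_bigr => h _ do rewrite (TT s1 u1) (TT s2 u2).
  rewrite (alg oppK Pinj u1 u2 cyc1 cyc2 ed).
  rewrite /cross_ratio_product phi_big. apply: eq_bigr => h1 _. rewrite phi_big. apply: eq_bigr => h2 _.
  by rewrite phiCR.
Qed.
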